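(* Let $V_1,\dots,V_N>0$ be fixed strengths and let $(X_{i,j})_{1\le i<j\le N}$ be independent Bernoulli variables under $\mathbb{P}_V$ with $\mathbb{P}_V(X_{i,j}=1)=\frac{V_i}{V_i+V_j}$; set $X_{j,i}=1-X_{i,j}$, $S_i=\sum_{j\ne i}X_{i,j}$ and $Z_N=\max_{1\le i\le N}S_i$. Then for any $a>0$, \[\mathbb{P}_V(Z_N\le a)\le\prod_{i=1}^N\mathbb{P}_V(S_i\le a).\]
   Context: In the paper the strengths are order statistics of i.i.d. positive random variables and the statement is made $\mathbb{P}$-almost surely for the conditional probability $\mathbb{P}_V$ given the strengths; this is equivalent to the statement for arbitrary fixed positive strengths. *)

(* Defs.v *)
From HB Require Import structures.
From mathcomp Require Import all_boot all_order all_algebra.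
Set Implicit Arguments. Unset Strict Implicit. Unset Printing Implicit Defensive.
Import Order.TTheory GRing.Theory Num.Theory.
Local Open Scope ring_scope.

(* Unordered pairs {i,j} with i < j, indices in 'I_N (players 1..N). *)
Definition pairs (N : nat) := {p : 'I_N * 'I_N | (p.1 < p.2)%N}.

(* An outcome assigns to each pair (i,j), i<j, the value X_{i,j} in {0,1}. *)
Definition outcome (N : nat) := {ffun pairs N -> bool}.

Section BT.
Variables (R : realFieldType) (N : nat) (V : 'I_N -> R).

Definition pwin (e : pairs N) : R := V (val e).1 / (V (val e).1 + V (val e).2).

Definition weight (w : outcome N) : R :=
  \prod_(e : pairs N) (if w e then pwin e else 1 - pwin e).

Definition PV (E : pred (outcome N)) : R := \sum_(w : outcome N | E w) weight w.

(* X_{i,j} for i<j read off the outcome; X_{j,i} = 1 - X_{i,j}; X_{i,i} unused. *)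
Definition Xij (w : outcome N) (i j : 'I_N) : nat :=
  match insub (i, j) : option (pairs N) with
  | Some e => nat_of_bool (w e)
  | None => match insub (j, i) : option (pairs N) with
            | Some e => (1 - nat_of_bool (w e))%N
            | None => 0%N
            end
  end.

Definition Sc (w : outcome N) (i : 'I_N) : nat := (\sum_(j < N | j != i) Xij w i j)%N.

Definition ZN (w : outcome N) : nat := (\max_(i < N) Sc w i)%N.
End BT.

(* Main.v *)
Require Import Defs.
From HB Require Import structures.
From mathcomp Require Import all_boot all_order all_algebra.
From mathcomp Require Import ring lra.
Import Order.TTheory GRing.Theory Num.Theory.
Local Open Scope ring_scope.

Section Proof8.
Variables (R : realFieldType) (N : nat) (V : 'I_N -> R).
Hypothesis hV : forall i, 0 < V i.

Local Notation p := (pwin V).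
Local Notation PV := (PV V).

Lemma p_ge0 e : 0 <= p e.
Proof. rewrite /pwin; apply: divr_ge0; apply: ltW; rewrite ?addr_gt0 ?hV //. Qed.

Lemma p_le1 e : p e <= 1.
Proof.
rewrite /pwin ler_pdivrMr ?addr_gt0 ?hV // mul1r.
have := hV (val e).2; lra.
Qed.

Definition fct e (b : bool) : R := if b then p e else 1 - p e.

Lemma fct_ge0 e b : 0 <= fct e b.
Proof. rewrite /fct; case: b; first exact: p_ge0. by rewrite subr_ge0 p_le1. Qed.

Lemma weight_ge0 w : 0 <= weight V w.
Proof. by apply: prodr_ge0 => e _; apply: (fct_ge0 e (w e)). Qed.

Lemma PV_ge0 E : 0 <= PV E.
Proof. by apply: sumr_ge0 => w _; apply: weight_ge0. Qed.

Lemma PV_le (E1 E2 : pred (outcome N)) : (forall w, E1 w -> E2 w) -> PV E1 <= PV E2.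
Proof.
move=> h; rewrite /Defs.PV (bigID E1 E2) /=.
have -> : \sum_(i | E2 i && E1 i) weight V i = \sum_(i | E1 i) weight V i.
  apply: eq_bigl => w; case E: (E1 w); last by rewrite andbF.
  by rewrite (h _ E).
rewrite lerDl; apply: sumr_ge0 => w _; exact: weight_ge0.
Qed.

Lemma PV_ext (E1 E2 : pred (outcome N)) : (forall w, E1 w = E2 w) -> PV E1 = PV E2.
Proof. by move=> h; apply: eq_bigl. Qed.
Arguments PV_ext {E1 E2}.

Lemma PVT : PV predT = 1.
Proof.
rewrite /Defs.PV /weight.
have := bigA_distr_bigA (fun (e : pairs N) (b : bool) => fct e b).
rewrite /= => <-. apply: big1 => e _.
by rewrite big_bool /fct /=; ring.
Qed.

Definition upd (w : outcome N) e (b : bool) : outcome N :=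
  [ffun x => if x == e then b else w x].

Definition flip (e : pairs N) (w : outcome N) := upd w e (~~ w e).

Lemma flipK e : involutive (flip e).
Proof.
move=> w; apply/ffunP => x; rewrite /flip /upd !ffunE eqxx.
by case: eqP => [->|]; rewrite ?negbK.
Qed.

Definition pi e (w : outcome N) := \prod_(x | x != e) fct x (w x).

Lemma weight_split e w : weight V w = fct e (w e) * pi e w.
Proof. by rewrite /weight (bigD1 e). Qed.

Lemma pi_flip e w : pi e (flip e w) = pi e w.
Proof. by apply: eq_bigr => x hx; rewrite /flip /upd ffunE (negbTE hx). Qed.

Lemma flip_sum e (H : pred (outcome N)) :
  (forall w, H (flip e w) = H w) ->
  \sum_(w | H w && ~~ w e) pi e w = \sum_(w | H w && w e) pi e w.
Proof.
move=> hH; rewrite (reindex_inj (can_inj (flipK e))) /=.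
apply: eq_big => w; last by rewrite pi_flip.
by rewrite hH /flip /upd ffunE eqxx negbK.
Qed.

Lemma PV_true e (H : pred (outcome N)) :
  (forall w, H (flip e w) = H w) ->
  PV H = \sum_(w | H w && w e) pi e w.
Proof.
move=> hH; rewrite /Defs.PV. rewrite (bigID (fun w : outcome N => w e)) /=.
rewrite (eq_bigr (fun w => p e * pi e w)); last first.
  by move=> w /andP[_ h]; rewrite (weight_split e) /fct h.
rewrite [X in _ + X](eq_bigr (fun w => (1 - p e) * pi e w)); last first.
  by move=> w /andP[_ hn]; rewrite (weight_split e) /fct (negbTE hn).
by rewrite -!mulr_sumr flip_sum //; ring.
Qed.

Lemma PV_cond e (H0 H1 : pred (outcome N)) :
  (forall w, H0 (flip e w) = H0 w) -> (forall w, H1 (flip e w) = H1 w) ->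
  PV (fun w => if w e then H1 w else H0 w) = p e * PV H1 + (1 - p e) * PV H0.
Proof.
move=> h0 h1; rewrite (PV_true _ _ h1) (PV_true _ _ h0) -(flip_sum _ _ h0) /Defs.PV.
rewrite (bigID (fun w : outcome N => w e)) /=.
rewrite [X in X + _ = _](eq_big (fun w => H1 w && w e) (fun w => p e * pi e w)); last first.
- by move=> w /andP[_ h]; rewrite (weight_split e) /fct h.
- by move=> w; case: (w e); rewrite ?andbT ?andbF.
rewrite [X in _ + X = _](eq_big (fun w => H0 w && ~~ w e) (fun w => (1 - p e) * pi e w)); last first.
- by move=> w /andP[_ hn]; rewrite (weight_split e) /fct (negbTE hn).
- by move=> w; case: (w e); rewrite ?andbT ?andbF.
by rewrite -!mulr_sumr.
Qed.


Definition winner (e : pairs N) (b : bool) : 'I_N := if b then (val e).1 else (val e).2.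
Definition SF (F : {set pairs N}) (w : outcome N) (i : 'I_N) : nat :=
  (\sum_(x in F) (winner x (w x) == i))%N.

Lemma SF_flip (F : {set pairs N}) e w i : e \notin F -> SF F (flip e w) i = SF F w i.
Proof.
move=> he; apply: eq_bigr => x hx; rewrite /flip /upd ffunE.
have -> : (x == e) = false by apply/negbTE/eqP => h; move: he; rewrite -h hx.
by [].
Qed.

Lemma SF_D1 (F : {set pairs N}) e w i : e \in F ->
  SF F w i = ((winner e (w e) == i) + SF (F :\ e) w i)%N.
Proof. by move=> he; rewrite /SF (big_setD1 _ he). Qed.

Definition downc (D : 'I_N -> pred nat) := forall i m, D i m.+1 -> D i m.

Lemma final_ineq (P a0 a1 b0 b1 Pi : R) :
  0 <= P -> P <= 1 -> 0 <= Pi -> a1 <= a0 -> b1 <= b0 ->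
  P * (a1 * (b0 * Pi)) + (1 - P) * (a0 * (b1 * Pi)) <=
  (P * a1 + (1 - P) * a0) * ((P * b0 + (1 - P) * b1) * Pi).
Proof.
move=> h0 h1 hP ha hb.
rewrite -subr_ge0.
have -> : (P * a1 + (1 - P) * a0) * ((P * b0 + (1 - P) * b1) * Pi) -
  (P * (a1 * (b0 * Pi)) + (1 - P) * (a0 * (b1 * Pi))) =
  P * (1 - P) * (a0 - a1) * (b0 - b1) * Pi by ring.
have h2 : 0 <= 1 - P by rewrite subr_ge0.
have h3 : 0 <= a0 - a1 by rewrite subr_ge0.
have h4 : 0 <= b0 - b1 by rewrite subr_ge0.
by rewrite !mulr_ge0.
Qed.

Lemma main_ind n : forall F : {set pairs N}, #|F| = n ->
  forall D : 'I_N -> pred nat, downc D ->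
  PV (fun w => [forall i, D i (SF F w i)]) <= \prod_i PV (fun w => D i (SF F w i)).
Proof.
elim: n => [|n IH] F hF D hD.
  have F0 : F = set0 by apply/eqP; rewrite -cards_eq0 hF.
  have SF0 w i : SF F w i = 0%N by rewrite /SF F0 big_set0.
  case: (boolP [forall i, D i 0%N]) => hall.
  - rewrite (PV_ext (E2 := predT)); last by move=> w; rewrite (eq_forallb (fun i => congr1 (D i) (SF0 w i))).
    rewrite PVT big1 // => i _; rewrite (PV_ext (E2 := predT)) ?PVT // => w.
    by rewrite SF0 (forallP hall).
  - rewrite (PV_ext (E2 := pred0)); last first.
      by move=> w; rewrite (eq_forallb (fun i => congr1 (D i) (SF0 w i))) (negbTE hall).
    rewrite [X in X <= _]/Defs.PV big_pred0_eq; apply: prodr_ge0 => i _; exact: PV_ge0.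
have : (0 < #|F|)%N by rewrite hF.
case/card_gt0P => e he.
have hF0 : #|F :\ e| = n by rewrite (cardsD1 e F) he in hF; case: hF.
have heF0 : e \notin F :\ e by rewrite setD11.
set F0 := F :\ e in hF0 heF0.
set u := (val e).1; set v := (val e).2.
have huv : u != v by apply/eqP => h; have := valP e; rewrite -/u -/v h ltnn.
pose D1 := fun i (m : nat) => D i (m + (i == u))%N.
pose D0 := fun i (m : nat) => D i (m + (i == v))%N.
have hD1 : downc D1 by move=> i m; rewrite /D1 addSn; apply: hD.
have hD0 : downc D0 by move=> i m; rewrite /D0 addSn; apply: hD.
pose A1 i := PV (fun w => D1 i (SF F0 w i)).
pose A0 i := PV (fun w => D0 i (SF F0 w i)).
have hwin w i : D i (SF F w i) = if w e then D1 i (SF F0 w i) else D0 i (SF F0 w i).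
  rewrite (SF_D1 _ _ _ _ he) /D1 /D0 /winner -/u -/v addnC.
  by case: (w e); rewrite eq_sym.
have hfac i : PV (fun w => D i (SF F w i)) = p e * A1 i + (1 - p e) * A0 i.
  rewrite (PV_ext (E2 := fun w => if w e then D1 i (SF F0 w i) else D0 i (SF F0 w i))) //.
  by rewrite PV_cond // => w; rewrite SF_flip.
rewrite (PV_ext (E2 := fun w => if w e then [forall i, D1 i (SF F0 w i)]
                                 else [forall i, D0 i (SF F0 w i)])); last first.
  move=> w; case E: (w e); apply: eq_forallb => i; by rewrite hwin E.
rewrite PV_cond; last first.
- by move=> w; apply: eq_forallb => i; rewrite SF_flip.
- by move=> w; apply: eq_forallb => i; rewrite SF_flip.
apply: le_trans (_ : p e * \prod_i A1 i + (1 - p e) * \prod_i A0 i <= _).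
  apply: lerD; apply: ler_wpM2l; rewrite ?subr_ge0 ?p_ge0 ?p_le1 //; exact: IH.
have hrest i : i != u -> i != v -> A1 i = A0 i.
  move=> h1 h2; apply: PV_ext => w; by rewrite /D1 /D0 (negbTE h1) (negbTE h2).
rewrite (eq_bigr _ (fun i _ => hfac i)).
have hvu : v != u by rewrite eq_sym.
have split2 (f : 'I_N -> R) : \prod_i f i = f u * (f v * \prod_(i | (i != u) && (i != v)) f i).
  by rewrite (bigD1 u) // (bigD1 v) //=.
rewrite !split2.
have -> : \prod_(i | (i != u) && (i != v)) (p e * A1 i + (1 - p e) * A0 i) =
          \prod_(i | (i != u) && (i != v)) A1 i.
  apply: eq_bigr => i /andP[h1 h2]; rewrite hrest //; ring.
have -> : \prod_(i | (i != u) && (i != v)) A0 i = \prod_(i | (i != u) && (i != v)) A1 i.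
  by apply: eq_bigr => i /andP[h1 h2]; rewrite hrest.
have hA1v : A1 v = A0 u -> True by [].
have e1 : A1 v = PV (fun w => D v (SF F0 w v)).
  by apply: PV_ext => w; rewrite /D1 eq_sym (negbTE huv) addn0.
have e2 : A0 u = PV (fun w => D u (SF F0 w u)).
  by apply: PV_ext => w; rewrite /D0 (negbTE huv) addn0.
apply: final_ineq; rewrite ?p_ge0 ?p_le1 //.
- by apply: prodr_ge0 => i _; exact: PV_ge0.
- rewrite e2; apply: PV_le => w; rewrite /D1 eqxx addn1; exact: hD.
- rewrite e1; apply: PV_le => w; rewrite /D0 eqxx addn1; exact: hD.
Qed.


Lemma pairs_lt (e : pairs N) x y : val e = (x, y) -> (x < y)%N.
Proof. by move=> h; have := valP e; rewrite h. Qed.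
Arguments pairs_lt {e x y}.

Definition cc (w : outcome N) (i : 'I_N) (e : pairs N) (j : 'I_N) : nat :=
  if val e == (i, j) then nat_of_bool (w e)
  else if val e == (j, i) then nat_of_bool (~~ w e) else 0%N.

Lemma Xij_cc w i j : Xij w i j = (\sum_e cc w i e j)%N.
Proof.
rewrite /Xij; case: insubP => [e0 Hlt He0|Hnlt].
  rewrite (bigD1 e0) //= /cc He0 eqxx big1 ?addn0 // => e hne.
  have -> : (val e == (i, j)) = false.
    by apply/negbTE; apply: contra hne => /eqP h; apply/eqP/val_inj; rewrite h He0.
  case: eqP => // /pairs_lt h; move: Hlt => /= h'.
  by have := ltn_trans h h'; rewrite ltnn.
case: insubP => [e1 Hlt He1|Hn2].
  rewrite (bigD1 e1) //= /cc He1 eqxx.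
  have -> : ((j, i) == (i, j)) = false.
    by apply/negbTE/eqP => -[h _]; move: Hlt; rewrite /= h ltnn.
  rewrite big1 ?addn0; first by case: (w e1).
  move=> e hne.
  have -> : (val e == (j, i)) = false.
    by apply/negbTE; apply: contra hne => /eqP h; apply/eqP/val_inj; rewrite h He1.
  by case: eqP => // /pairs_lt h; rewrite h in Hnlt.
rewrite big1 // => e _; rewrite /cc.
case: eqP => [/pairs_lt h|_]; first by rewrite h in Hnlt.
by case: eqP => [/pairs_lt h|_] //; rewrite h in Hn2.
Qed.

Lemma sum_one (i k : 'I_N) (b : nat) : k != i ->
  (\sum_(j | j != i) (if k == j then b else 0))%N = b.
Proof.
move=> hk; rewrite (bigD1 k) //= eqxx big1 ?addn0 // => j /andP[_ hj].
by rewrite eq_sym (negbTE hj).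
Qed.

Lemma cc_sum w i e : (\sum_(j | j != i) cc w i e j)%N = (winner e (w e) == i).
Proof.
case He: (val e) => [x y].
have hxy := pairs_lt He.
have hne : x != y by apply/eqP => h; rewrite h ltnn in hxy.
rewrite /winner He /=.
case: (eqVneq x i) => [hx|hx].
  subst x.
  rewrite (eq_bigr (fun j => if y == j then nat_of_bool (w e) else 0%N)).
    rewrite sum_one 1?eq_sym //. case: (w e); rewrite /= ?eqxx ?(negbTE hne) //.
  move=> j hj; rewrite /cc He xpair_eqE eqxx /=.
  by case: (y == j); rewrite // ?xpair_eqE [y == i]eq_sym (negbTE hne) andbF.
case: (eqVneq y i) => [hy|hy].
  subst y.
  rewrite (eq_bigr (fun j => if x == j then nat_of_bool (~~ w e) else 0%N)).
    rewrite sum_one //; case: (w e) => /=; last by rewrite eqxx.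
    by case: eqP hx => // ->; rewrite eqxx.
  move=> j hj; rewrite /cc He !xpair_eqE eqxx /= andbT.
  by rewrite (negbTE hx) /= eq_sym.
rewrite big1; first by case: (w e); rewrite /= ?(negbTE hx) ?(negbTE hy).
move=> j _; rewrite /cc He !xpair_eqE (negbTE hx) (negbTE hy) /=.
by rewrite andbF.
Qed.

Lemma Sc_SF w i : Sc w i = SF [set: pairs N] w i.
Proof.
rewrite /Sc (eq_bigr _ (fun j _ => Xij_cc w i j)) exchange_big /SF.
rewrite [in RHS](eq_bigl predT); last by move=> x; rewrite in_setT.
by apply: eq_bigr => e _; rewrite cc_sum.
Qed.

End Proof8.

Theorem lemma8 (R : realFieldType) (N : nat) (V : 'I_N -> R)
  (hV : forall i, 0 < V i) (a : R) (ha : 0 < a) :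
  PV V (fun w => (ZN w)%:R <= a) <= \prod_(i < N) PV V (fun w => (Sc w i)%:R <= a).
Proof.
pose D := fun (_ : 'I_N) (m : nat) => m%:R <= a.
have hD : downc N D.
  move=> i m; rewrite /D => h; apply: le_trans h; rewrite ler_nat; exact: leqnSn.
have := @main_ind R N V hV _ [set: pairs N] (erefl _) D hD.
have eZ w : ((ZN w)%:R <= a) = [forall i, D i (SF N [set: pairs N] w i)].
  apply/idP/forallP => [h i|h].
    rewrite /D -Sc_SF; apply: le_trans h; rewrite ler_nat.
    exact: (leq_bigmax (F := fun i => Sc w i)).
  rewrite /ZN; apply: (big_ind (fun m : nat => m%:R <= a)).
  - by rewrite ltW.
  - by move=> x y hx hy; rewrite /maxn; case: ltnP.
  - by move=> i _; have := h i; rewrite /D -Sc_SF.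
rewrite (@PV_ext R N V _ (fun w => [forall i, D i (SF N [set: pairs N] w i)])) //.
move=> h; apply: le_trans h _; rewrite le_eqVlt; apply/orP; left; apply/eqP.
by apply: eq_bigr => i _; apply: PV_ext => w; rewrite /D Sc_SF.
Qed.
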